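(* Let $(G;+,\cdot)$ be a finite field of order $q$. Then the class of affine functions of arity at least $\max(q,3)+1$ over $(G;+,\cdot)$ is reconstructible: for every $n \geq \max(q,3)+1$, every affine $f\colon G^n\to G$ and every function $g \colon G^n \to G$ (not assumed affine) with $\operatorname{deck} g = \operatorname{deck} f$, we have $g \equiv f$.
   Context: A function $f\colon G^n\to G$ is affine if $f(x_1,\dots,x_n) = a_1x_1+\dots+a_nx_n+c$ for some $a_i,c\in G$. Identification minor: for $f\colon A^n\to B$ and $I=\{i,j\}$, $i<j$, $f_I\colon A^{n-1}\to B$ is $f_I(x_1,\dots,x_{n-1}) = f(x_1,\dots,x_{j-1},x_i,x_j,\dots,x_{n-1})$. Two functions $f,g\colon A^n\to B$ are equivalent, $f\equiv g$, if $f(x_1,\dots,x_n) = g(x_{\sigma(1)},\dots,x_{\sigma(n)})$ for some permutation $\sigma$ of $\{1,\dots,n\}$. The deck of $f$ is the multiset $\langle f_I/{\equiv} : I\rangle$ of equivalence classes of all $\binom n2$ identification minors of $f$. *)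

(* Defs.v *)
From HB Require Import structures.
From mathcomp Require Import all_boot all_order all_algebra all_fingroup all_field.
Set Implicit Arguments. Unset Strict Implicit. Unset Printing Implicit Defensive.
Import GRing.Theory.
Local Open Scope ring_scope.

(* An n-ary function G^n -> G is represented as n.-tuple G -> G;
   coordinates are indexed 0..n-1. *)

Definition affine (G : fieldType) (n : nat) (f : n.-tuple G -> G) : Prop :=
  exists (a : 'I_n -> G) (c : G),
    forall x : n.-tuple G, f x = \sum_(i < n) a i * tnth x i + c.

Definition equiv_fun (G : Type) (n : nat) (f g : n.-tuple G -> G) : Prop :=
  exists s : 'S_n, forall x : n.-tuple G,
    f x = g [tuple tnth x (s i) | i < n].

(* Identification minor f_I for I = {i,j}, i < j (0-indexed):
   f_I(x_0,...,x_{n-2}) = f(x_0,...,x_{j-1}, x_i, x_j, ..., x_{n-2}). *)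
Definition minor (G : fieldType) (n : nat) (f : n.-tuple G -> G) (i j : nat)
  : n.-1.-tuple G -> G :=
  fun x => f [tuple (if (k < j)%N then nth 0 x k
                     else if k == j :> nat then nth 0 x i
                     else nth 0 x k.-1) | k < n].

Definition pairs (n : nat) := {p : 'I_n * 'I_n | (p.1 < p.2)%N}.

(* deck f = deck g : the multisets of ≡-classes of the minors coincide, i.e.
   there is a bijection s of the 2-subsets with f_I ≡ g_{s(I)}. *)
Definition same_deck (G : fieldType) (n : nat) (f g : n.-tuple G -> G) : Prop :=
  exists s : pairs n -> pairs n, bijective s /\
    forall I : pairs n,
      equiv_fun (minor f (val I).1 (val I).2)
                (minor g (val (s I)).1 (val (s I)).2).

(* Main.v *)
Require Import Defs.
From HB Require Import structures.
From mathcomp Require Import all_boot all_order all_algebra all_fingroup all_field.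
From mathcomp Require Import zify ring.
Set Implicit Arguments. Unset Strict Implicit. Unset Printing Implicit Defensive.
Import GRing.Theory.

Definition cnt (G : eqType) N (a : 'I_N -> G) (v : G) : nat := \sum_(k < N) (a k == v).

Lemma cnt_tuple (G : eqType) N (a : 'I_N -> G) x :
  cnt a x = count_mem x [tuple a i | i < N].
Proof.
rewrite /cnt /= count_map -sum1_count big_enum_cond /= [RHS]big_mkcond /=.
by apply: eq_bigr => i _; case: (a i == x).
Qed.

Lemma sum_part (T : finType) N (a : 'I_N -> T) (F : T -> nat) :
  \sum_(i < N) F (a i) = \sum_(x : T) cnt a x * F x.
Proof.
under [RHS]eq_bigr do rewrite /cnt big_distrl /=.
rewrite exchange_big /=; apply: eq_bigr => i _.
rewrite (bigD1 (a i)) //= eqxx mul1n big1 ?addn0 // => x /negbTE.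
by rewrite eq_sym => ->.
Qed.

Lemma sum_onehot (T : finType) (c : T) : (\sum_(x : T) (c == x) = 1)%N.
Proof. by rewrite (bigD1 c) //= eqxx big1 // => x /negbTE; rewrite eq_sym => ->. Qed.

Lemma cnt_sum (T : finType) N (a : 'I_N -> T) : (\sum_(x : T) cnt a x = N)%N.
Proof.
rewrite /cnt exchange_big /=; under eq_bigr do rewrite sum_onehot.
by rewrite sum_nat_const card_ord muln1.
Qed.

Lemma sum_pos_ex (T : finType) (P : pred T) (F : T -> nat) :
  (0 < \sum_(x | P x) F x)%N -> exists x, P x /\ (0 < F x)%N.
Proof.
case: (pickP [pred x | P x && (0 < F x)%N]) => [x /andP [h1 h2]|h]; first by exists x.
rewrite big1 // => x Px; have := h x; rewrite /= Px /=; lia.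
Qed.

Lemma cnt_ex (T : eqType) N (a : 'I_N -> T) x : (0 < cnt a x)%N -> exists i, a i = x.
Proof. by case/sum_pos_ex => i [_]; case: eqP => // h _; exists i. Qed.

Lemma cnt_ex2 (T : eqType) N (a : 'I_N -> T) x : (1 < cnt a x)%N ->
  exists i j : 'I_N, (i < j)%N /\ a i = x /\ a j = x.
Proof.
move=> h; have [i hi] := cnt_ex (ltnW h).
move: h; rewrite /cnt (bigD1 i) //= hi eqxx add1n ltnS => /sum_pos_ex [j [hji]].
case: eqP => // hj _.
case: (ltngtP i j) => hij; first by exists i, j.
  by exists j, i.
by move: hji; rewrite (_ : j = i) ?eqxx //; apply: val_inj.
Qed.

Definition pairs_sumT N (F : 'I_N -> 'I_N -> nat) :
  (\sum_(I : pairs N) (F (val I).1 (val I).2 + F (val I).2 (val I).1) =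
   \sum_(i < N) \sum_(j < N | j != i) F i j)%N.
Proof.
have -> : (\sum_(I : pairs N) (F (val I).1 (val I).2 + F (val I).2 (val I).1) =
  \sum_(p : 'I_N * 'I_N | (p.1 < p.2)%N) (F p.1 p.2 + F p.2 p.1))%N.
  symmetry; rewrite (reindex_omap (val : pairs N -> _) insub); last first.
    by move=> p hp; rewrite insubT.
  by apply: eq_bigl => -[p hp] /=; rewrite insubT hp /= eqxx.
rewrite big_split /=.
rewrite [X in (_ + X)%N](reindex_inj (h := fun p : 'I_N * 'I_N => (p.2, p.1))); last first.
  by move=> [x1 x2] [y1 y2] [-> ->].
rewrite [RHS]pair_big_dep /=.

rewrite [RHS](bigID (fun p : 'I_N * 'I_N => (p.1 < p.2)%N)) /=.
congr (_ + _)%N; apply: eq_bigl => -[i j] /=.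
  by case: (ltngtP i j) => h //; rewrite ?andbF // neq_ltn h orbT.
case: (ltngtP i j) => h //; rewrite ?andbF ?andbT //; first by rewrite neq_ltn h.
by apply/esym/negbTE; rewrite negbK; apply/eqP/val_inj.
Qed.

Section Multi.
Variable G : finFieldType.

Definition ccnt n' (a : 'I_n'.+1 -> G) (i j : 'I_n'.+1) (v : G) : nat :=
  cnt (fun m : 'I_n' => (a (lift j m) + (if (m == i :> nat) then a j else 0%R))%R) v.

Lemma ccnt_eq n' (a : 'I_n'.+1 -> G) (i j : 'I_n'.+1) v : (i < j)%N ->
  (ccnt a i j v + (a i == v) + (a j == v) = cnt a v + ((a i + a j)%R == v))%N.
Proof.
move=> hij; have hi : (i < n')%N := leq_trans hij (ltn_ord j).
have hl : lift j (Ordinal hi) = i by apply: val_inj; rewrite /= /bump leqNgt hij.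
rewrite /ccnt /cnt [in RHS](bigD1_ord j) //= (bigD1 (Ordinal hi)) //= eqxx hl.
rewrite [in RHS](bigD1 (Ordinal hi)) //= hl.
have -> : (\sum_(m < n' | m != Ordinal hi)
    ((a (lift j m) + (if (m == i :> nat) then a j else 0%R))%R == v) =
    \sum_(m < n' | m != Ordinal hi) (a (lift j m) == v))%N.
  apply: eq_bigr => m hm; rewrite ifF ?addr0 //; apply/negbTE.
  by apply: contra hm => /eqP h; apply/eqP/val_inj.
set S := (\sum_(m < n' | m != Ordinal hi) (a (lift j m) == v))%N.
lia.
Qed.

Definition Q N (a : 'I_N -> G) (v : G) : nat :=
  \sum_(i < N) \sum_(j < N | j != i) ((a i + a j)%R == v).

Lemma sum_ccnt n' (a : 'I_n'.+1 -> G) v :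
  (2 * \sum_(I : pairs n'.+1) ccnt a (val I).1 (val I).2 v + 2 * n' * cnt a v
   = n'.+1 * n' * cnt a v + Q a v)%N.
Proof.
have h1 : (\sum_(I : pairs n'.+1)
   (ccnt a (val I).1 (val I).2 v + (a (val I).1 == v) + (a (val I).2 == v))
   = \sum_(I : pairs n'.+1) (cnt a v + ((a (val I).1 + a (val I).2)%R == v)))%N.
  by apply: eq_bigr => I _; rewrite ccnt_eq //; exact: (valP I).
rewrite !big_split /= in h1.
have h2 := pairs_sumT (N := n'.+1) (fun i j => (a i == v : nat)).
rewrite big_split /= in h2.
have hc i : (\sum_(j < n'.+1 | j != i) 1 = n')%N.
  by rewrite sum1_card cardC1 card_ord.
have e2 : (\sum_(i < n'.+1) \sum_(j < n'.+1 | j != i) (a i == v : nat) = n' * cnt a v)%N.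
  rewrite /cnt big_distrr /=; apply: eq_bigr => i _.
  by rewrite sum_nat_const /= -sum1_card hc mulnC.
have h3 := pairs_sumT (N := n'.+1) (fun i j => ((a i + a j)%R == v : nat)).
have h4 := pairs_sumT (N := n'.+1) (fun i j => cnt a v).
have e4 : (\sum_(i < n'.+1) \sum_(j < n'.+1 | j != i) cnt a v = n'.+1 * n' * cnt a v)%N.
  under eq_bigr do rewrite sum_nat_const -sum1_card hc.
  by rewrite sum_nat_const card_ord mulnA.
rewrite e2 in h2; rewrite e4 in h4; rewrite -/(Q a v) in h3.
have hh3 : (2 * \sum_(I : pairs n'.+1) ((a (val I).1 + a (val I).2)%R == v) = Q a v)%N.
  rewrite -h3 mul2n -addnn -big_split /=; apply: eq_bigr => I _.
  by congr (_ + _)%N; rewrite addrC.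
have hh4 : (2 * \sum_(I : pairs n'.+1) cnt a v = n'.+1 * n' * cnt a v)%N.
  by rewrite -h4 mul2n -addnn -big_split.
rewrite /= in hh3 hh4 *.
rewrite -[(2 * n' * _)%N]mulnA.
move: h1 h2 hh3 hh4.
set S1 := (\sum_I ccnt _ _ _ _)%N.
set S2 := (\sum_I cnt _ _)%N.
set S3 := (\sum_I ((a (sval I).1 + a (sval I).2)%R == v))%N.
lia.
Qed.

Lemma Q_sum N (a : 'I_N -> G) : (\sum_(v : G) Q a v = N * N.-1)%N.
Proof.
rewrite /Q exchange_big /=.
under eq_bigr do rewrite exchange_big /=.
under eq_bigr do under eq_bigr do rewrite sum_onehot.
under eq_bigr do rewrite sum1_card cardC1 card_ord.
by rewrite sum_nat_const card_ord.
Qed.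

Lemma Q_pos N (a : 'I_N -> G) (i j : 'I_N) : i != j -> (0 < Q a ((a i + a j)%R))%N.
Proof.
move=> hij; rewrite /Q (bigD1 i) //= (bigD1 j) /=; last by rewrite eq_sym.
by rewrite eqxx; lia.
Qed.

Lemma QF N (a : 'I_N -> G) v :
  (Q a v + \sum_(x : G) ((x + x)%R == v) * cnt a x
   = \sum_(x : G) cnt a x * cnt a (v - x)%R)%N.
Proof.
have e1 : (\sum_(i < N) \sum_(j < N) ((a i + a j)%R == v) = Q a v + \sum_(i < N) ((a i + a i)%R == v))%N.
  rewrite /Q -big_split /=; apply: eq_bigr => i _.
  by rewrite (bigD1 i) //= addnC.
have e2 : (\sum_(i < N) \sum_(j < N) ((a i + a j)%R == v) = \sum_(i < N) cnt a (v - a i)%R)%N.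
  apply: eq_bigr => i _; apply: eq_bigr => j _.
  congr (nat_of_bool _); apply/idP/idP => /eqP h; apply/eqP; first by rewrite -h addrC addKr.
  by rewrite h addrC subrK.
rewrite (sum_part a (fun x => ((x + x)%R == v : nat))) in e1.
rewrite (sum_part a (fun x => cnt a (v - x)%R)) in e2.
under eq_bigr do rewrite mulnC.
move: e1 e2; set T1 := (\sum_(x : G) cnt a x * ((x + x)%R == v))%N; set T2 := (\sum_(x : G) cnt a x * cnt a (v - x)%R)%N.
lia.
Qed.
End Multi.

Section Quad.
Variable G : finFieldType.
Local Open Scope ring_scope.

Lemma sdelta (F : G -> int) c : \sum_(x : G) F x * (x == c)%:Z = F c.
Proof. by rewrite (bigD1 c) //= eqxx mulr1 big1 ?addr0 // => x /negbTE ->; rewrite mulr0. Qed.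

Lemma sdelta' (F : G -> int) c : \sum_(x : G) (x == c)%:Z * F x = F c.
Proof. by under eq_bigr do rewrite mulrC; rewrite sdelta. Qed.

Lemma eq_subl (v x c : G) : (v - x == c) = (x == v - c).
Proof.
apply/idP/idP => /eqP h; apply/eqP; first by rewrite -h opprB addrC subrK.
by rewrite h opprB addrC subrK.
Qed.

Lemma quad_shift (A B : G -> int) v w :
  (forall x, B x = A x + (x == w)%:Z - (x == v)%:Z) ->
  (\sum_(x : G) B x * B (v - x) - \sum_(x : G) ((x + x) == v)%:Z * B x)
  - (\sum_(x : G) A x * A (v - x) - \sum_(x : G) ((x + x) == v)%:Z * A x)
  = 2 * (A (v - w) - A 0 - (w == 0)%:Z + (v == 0)%:Z).
Proof.
move=> hB.
under eq_bigr do rewrite !hB !eq_subl subrr.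
under [X in _ - X - _]eq_bigr do rewrite hB.
set S1 := \sum_i _ * _.
have -> : S1 = \sum_(i : G) A i * A (v - i) + \sum_(i : G) A i * (i == v - w)%:Z
   - \sum_(i : G) A i * (i == 0)%:Z + \sum_(i : G) (i == w)%:Z * A (v - i)
   + \sum_(i : G) (i == w)%:Z * (i == v - w)%:Z - \sum_(i : G) (i == w)%:Z * (i == 0)%:Z
   - \sum_(i : G) (i == v)%:Z * A (v - i) - \sum_(i : G) (i == v)%:Z * (i == v - w)%:Z
   + \sum_(i : G) (i == v)%:Z * (i == 0)%:Z.
  rewrite /S1; do ![rewrite -big_split /= | rewrite -sumrB /=]; apply: eq_bigr => i _; ring.
set S2 := \sum_i _ * (_ + _ - _).
have -> : S2 = \sum_(i : G) (i + i == v)%:Z * A i + \sum_(i : G) (i + i == v)%:Z * (i == w)%:Z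
   - \sum_(i : G) (i + i == v)%:Z * (i == v)%:Z.
  rewrite /S2; do ![rewrite -big_split /= | rewrite -sumrB /=]; apply: eq_bigr => i _; ring.
rewrite !sdelta' !sdelta subrr.
have e1 : (w == v - w) = (w + w == v).
  by apply/eqP/eqP => [h | <-]; [rewrite {1}h subrK | rewrite addrK].
have e2 : (v == v - w) = (w == 0) by rewrite eq_sym eq_subl subrr.
have e3 : (v + v == v) = (v == 0) by rewrite -subr_eq0 addrK.
rewrite e1 e2 e3; ring.
Qed.
End Quad.

Section MainMulti.
Variable G : finFieldType.

Definition deckcnt n' (a b : 'I_n'.+1 -> G) (s : pairs n'.+1 -> pairs n'.+1) :=
  forall I v, ccnt a (val I).1 (val I).2 v = ccnt b (val (s I)).1 (val (s I)).2 v.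

Lemma pair_of_cnt2 n' (a : 'I_n'.+1 -> G) u : (1 < cnt a u)%N ->
  exists I : pairs n'.+1, a (val I).1 = u /\ a (val I).2 = u.
Proof.
case/cnt_ex2 => i [j [hij [hi hj]]].
by exists (exist (fun p : 'I_n'.+1 * 'I_n'.+1 => (p.1 < p.2)%N) (i, j) hij).
Qed.

Lemma uu_neq (u : G) : u != 0%R -> ((u + u)%R == u) = false.
Proof. by move=> hu; rewrite -subr_eq0 addrK (negbTE hu). Qed.

Lemma R_half n' (a b : 'I_n'.+1 -> G) s u : u != 0%R -> (1 < cnt a u)%N ->
  deckcnt a b s ->
  (cnt b u <= cnt a u)%N /\ (cnt a u = cnt b u -> forall x, cnt a x = cnt b x).
Proof.
move=> hu h2 hd; have [I [h1 h1']] := pair_of_cnt2 h2.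
move: (s I) (hd I) => J hdI.
case: I h1 h1' hdI => [[i j] hij] /= h1 h1' hdI.
case: J hdI => [[k l] hkl] /= hdI.
have ea := ccnt_eq a u hij; rewrite h1 h1' eqxx uu_neq // in ea.
have eb := ccnt_eq b u hkl; rewrite -hdI in eb.
split; first by move: ea eb; rewrite /=; lia.
move=> heq.
have [hb1 hb2] : b k = u /\ b l = u.
  by move: ea eb; case: eqP => hb1; case: eqP => hb2 //=; lia.
move=> x; have := ccnt_eq a x hij; have := ccnt_eq b x hkl.
rewrite -hdI h1 h1' hb1 hb2 /=; lia.
Qed.

Lemma CP N (a b : 'I_N -> G) :
  (1 < \sum_(x : G) minn (cnt a x) (cnt b x))%N ->
  exists s, (0 < Q a s)%N /\ (0 < Q b s)%N.
Proof.
move=> h; have [x0 [_ hx0]] := sum_pos_ex (ltnW h).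
case: (leqP 2 (minn (cnt a x0) (cnt b x0))) => hm.
  move: hm; rewrite leq_min => /andP [ha hb].
  have [i [j [hij [hi hj]]]] := cnt_ex2 ha.
  have [k [l [hkl [hk hl]]]] := cnt_ex2 hb.
  exists (x0 + x0)%R; split.
    by rewrite -{1}hi -hj; apply: Q_pos; rewrite neq_ltn hij.
  by rewrite -{1}hk -hl; apply: Q_pos; rewrite neq_ltn hkl.
move: h; rewrite (bigD1 x0) //= => h.
have [y [hy hy0]] : exists y, y != x0 /\ (0 < minn (cnt a y) (cnt b y))%N.
  apply: sum_pos_ex; move: h hm.
  set m := minn (cnt a x0) (cnt b x0); set S := (\sum_(i | i != x0) _)%N; lia.
move: hx0 hy0; rewrite !leq_min => /andP [ha hb] /andP [ha' hb'].
have [i hi] := cnt_ex ha; have [j hj] := cnt_ex ha'.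
have [k hk] := cnt_ex hb; have [l hl] := cnt_ex hb'.
exists (x0 + y)%R; split.
  rewrite -hi -hj; apply: Q_pos; apply: contra hy => /eqP hij.
  by rewrite -hj -hi hij.
rewrite -hk -hl; apply: Q_pos; apply: contra hy => /eqP hkl.
by rewrite -hl -hk hkl.
Qed.

Lemma Posz_sum (T : finType) (F : T -> nat) :
  Posz (\sum_(x : T) F x) = (\sum_(x : T) Posz (F x))%R.
Proof. by apply: (big_morph Posz PoszD). Qed.

Lemma QFz N (a : 'I_N -> G) v :
  (Posz (Q a v) + \sum_(x : G) ((x + x) == v)%:Z * Posz (cnt a x)
   = \sum_(x : G) Posz (cnt a x) * Posz (cnt a (v - x)))%R.
Proof.
move: (Q a v) (QF a v) => q hq.
have := congr1 Posz hq; rewrite PoszD !Posz_sum => ->.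
by apply: eq_bigr => x _; rewrite PoszM.
Qed.

End MainMulti.

Section MainThm.
Variable G : finFieldType.

Lemma sum_eq_pointwise (T : finType) (F H : T -> nat) :
  (forall x, F x <= H x)%N -> (\sum_x F x = \sum_x H x)%N -> forall x, F x = H x.
Proof.
move=> hle hs x.
have : (\sum_x (H x - F x) == 0)%N by rewrite sumnB // hs subnn.
rewrite sum_nat_eq0 => /forallP /(_ x) /=; have := hle x; lia.
Qed.

Lemma multiset n' (a b : 'I_n'.+1 -> G) (s : pairs n'.+1 -> pairs n'.+1) :
  (3 <= n')%N -> bijective s -> deckcnt a b s -> forall v, cnt a v = cnt b v.
Proof.
move=> hn hs hd.
have hs0 := hs; case: hs0 => s' hs1 hs2.
have hd' : deckcnt b a s' by move=> J v; rewrite hd hs2.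
have R u : u != 0%R -> (1 < cnt a u)%N -> (1 < cnt b u)%N -> forall x, cnt a x = cnt b x.
  move=> hu ha hb; have [l1 e1] := R_half hu ha hd.
  have [l2 e2] := R_half hu hb hd'; apply: e1; lia.
set K := (n' * n'.-1)%N.
have hK : (n'.+1 * n' = K + 2 * n')%N by rewrite /K; case: n' hn {hd hd' R s s' hs hs1 hs2 a b K} => // m _ /=; nia.
have FE v : (K * cnt a v + Q a v = K * cnt b v + Q b v)%N.
  have sa := sum_ccnt a v; have sb := sum_ccnt b v.
  have e : (\sum_(I : pairs n'.+1) ccnt a (val I).1 (val I).2 v =
            \sum_(I : pairs n'.+1) ccnt b (val I).1 (val I).2 v)%N.
    rewrite [RHS](reindex_inj (bij_inj hs)); apply: eq_bigr => I _; exact: hd.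
  rewrite hK !mulnDl in sa sb; move: sa sb e.
  set Sa := (\sum_I ccnt a _ _ v)%N; set Sb := (\sum_I ccnt b _ _ v)%N.
  rewrite -!mulnA; lia.
case: (boolP [forall x, cnt a x == cnt b x]) => [/forallP h v | /forallPn [v0 hv0]].
  exact/eqP/h.
exfalso.
set t := (\sum_(x : G) (cnt a x - cnt b x))%N.
set t' := (\sum_(x : G) (cnt b x - cnt a x))%N.
have htt : t = t'.
  have e : (\sum_(x : G) (cnt a x + (cnt b x - cnt a x)) = \sum_(x : G) (cnt b x + (cnt a x - cnt b x)))%N.
    by apply: eq_bigr => x _; lia.
  by move: e; rewrite !big_split /= !cnt_sum -/t -/t'; lia.
have ht1 : (0 < t)%N.
  move: hv0 htt; rewrite /t /t' (bigD1 v0) //= [X in _ = X -> _](bigD1 v0) //=.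
  by move/eqP; lia.
have hle x : (K * (cnt a x - cnt b x) <= Q b x)%N by have := FE x; rewrite mulnBr; lia.
have hle' x : (K * (cnt b x - cnt a x) <= Q a x)%N by have := FE x; rewrite mulnBr; lia.
have hKt : (K * t <= n'.+1 * n')%N.
  by rewrite -(Q_sum b) /t big_distrr /=; apply: leq_sum => x _; exact: hle.
have hK6 : (2 * n' <= K)%N by rewrite /K; case: n' hn {hd hd' R s s' hs hs1 hs2 a b K hK FE v0 hv0 t t' htt ht1 hle hle' hKt} => // m h /=; nia.
have ht2 : (t <= 2)%N.
  case: (leqP t 2) => // h3; exfalso.
  have : (K * 3 <= K * t)%N by rewrite leq_mul2l h3 orbT.
  rewrite /K in hKt *; nia.
have [ht | ht] : t = 1%N \/ t = 2%N by lia.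
  have [v [_ hv]] : exists v, true /\ (0 < cnt a v - cnt b v)%N.
    by apply: sum_pos_ex; move: ht; rewrite /t => ->.
  have [w [_ hw]] : exists w, true /\ (0 < cnt b w - cnt a w)%N.
    by apply: sum_pos_ex; move: ht; rewrite htt /t' => ->.
  have hv1 : forall x, x != v -> (cnt a x - cnt b x = 0)%N.
    move=> x hx; move: ht; rewrite /t (bigD1 v) //=.
    set S := (\sum_(i | i != v) _)%N => hS.
    have : (S == 0)%N by apply/eqP; lia.
    by rewrite /S sum_nat_eq0 => /forallP /(_ x); rewrite hx => /eqP.
  have hw1 : forall x, x != w -> (cnt b x - cnt a x = 0)%N.
    move=> x hx; move: ht; rewrite htt /t' (bigD1 w) //=.
    set S := (\sum_(i | i != w) _)%N => hS.
    have : (S == 0)%N by apply/eqP; lia.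
    by rewrite /S sum_nat_eq0 => /forallP /(_ x); rewrite hx => /eqP.
  have hvv : (cnt a v - cnt b v = 1)%N.
    move: ht; rewrite /t (bigD1 v) //=; lia.
  have hww : (cnt b w - cnt a w = 1)%N.
    move: ht; rewrite htt /t' (bigD1 w) //=; lia.
  have hvw : v != w by apply/eqP => e; move: hww; rewrite -e; lia.
  have hx x : (cnt b x + (x == v) = cnt a x + (x == w))%N.
    case: (eqVneq x v) => [->|hxv]; first by rewrite (negbTE hvw) /=; lia.
    case: (eqVneq x w) => [->|hxw] /=; first by lia.
    by have := hv1 x hxv; have := hw1 x hxw; lia.
  have hQ : (Q b v = Q a v + K)%N by have := FE v; lia.
  have hB x : (Posz (cnt b x) = Posz (cnt a x) + (x == w)%:Z - (x == v)%:Z)%R.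
    by have := hx x; lia.
  have q := quad_shift hB.
  have qa := QFz a v; have qb := QFz b v.
  have key : (Posz (Q b v) - Posz (Q a v) = 2 * (Posz (cnt a (v - w)%R) - Posz (cnt a 0%R) - (w == 0%R)%:Z + (v == 0%R)%:Z))%R.
    rewrite -q -qa -qb; ring.
  have h0v : v == 0%R -> cnt a 0%R = cnt a v by move/eqP ->.
  have hu3 : (3 <= cnt a (v - w)%R)%N.
    move: key h0v; rewrite hQ; case: (v == 0%R) => /= key h0v.
      by have := h0v erefl; lia.
    lia.
  have hu0 : (v - w)%R != 0%R by rewrite subr_eq0.
  have hb3 : (1 < cnt b (v - w)%R)%N by have := hx (v - w)%R; lia.
  have := R _ hu0 (ltn_trans (ltnSn 1) hu3) hb3 v0.
  by move/eqP; rewrite (negbTE hv0).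
have hKe : K = (2 * n')%N by move: hKt; rewrite ht hK; lia.
have sK : (\sum_(x : G) K * (cnt a x - cnt b x) = K * t)%N by rewrite big_distrr.
have sK' : (\sum_(x : G) K * (cnt b x - cnt a x) = K * t')%N by rewrite big_distrr.
have eqb := sum_eq_pointwise hle (etrans sK _).
have eqa := sum_eq_pointwise hle' (etrans sK' _).
have hmin : (1 < \sum_(x : G) minn (cnt a x) (cnt b x))%N.
  have e : (\sum_(x : G) minn (cnt a x) (cnt b x) = \sum_(x : G) cnt a x - t)%N.
    by rewrite /t -sumnB; [apply: eq_bigr => x _; rewrite minnE | move=> x _; exact: leq_subr].
  rewrite e cnt_sum ht; lia.
have [z [hza hzb]] := CP hmin.
rewrite -eqa in hza; first rewrite -eqb in hzb.
- by move: hza hzb; rewrite !muln_gt0; lia.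
- by rewrite Q_sum -/t ht hK hKe; lia.
by rewrite Q_sum -/t' -htt ht hK hKe; lia.
Qed.
End MainThm.

Section Affine.
Variable G : fieldType.
Local Open Scope ring_scope.

Lemma minorT_lift n' (y : n'.-tuple G) (i j : 'I_n'.+1) (m : 'I_n') :
  (if (lift j m < j)%N then nth 0 y (lift j m)
   else if (lift j m == j :> nat) then nth 0 y i else nth 0 y (lift j m).-1)
  = tnth y m.
Proof.
rewrite (tnth_nth 0) /= /bump; case: (leqP j m) => h /=.
  rewrite add1n ltnNge (leq_trans h (leqnSn _)) /=.
  by rewrite ifF //; apply/negbTE; rewrite neq_ltn ltnS h orbT.
by rewrite add0n h.
Qed.

Lemma minor_affine n' (f : n'.+1.-tuple G -> G) (a : 'I_n'.+1 -> G) c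
    (i j : 'I_n'.+1) :
  (i < j)%N -> (forall x, f x = \sum_k a k * tnth x k + c) ->
  forall y : n'.-tuple G, minor f i j y =
    \sum_(m < n') (a (lift j m) + (if (m == i :> nat) then a j else 0))
        * tnth y m + c.
Proof.
move=> hij hf y; rewrite /minor hf; congr (_ + _).
rewrite (bigD1_ord j) //= tnth_mktuple ltnn eqxx.
under eq_bigr do rewrite tnth_mktuple minorT_lift.
under [RHS]eq_bigr do rewrite mulrDl.
rewrite big_split /= addrC; congr (_ + _).
have hi : (i < n')%N := leq_trans hij (ltn_ord j).
rewrite (bigD1 (Ordinal hi)) //= eqxx big1 ?addr0; first by rewrite (tnth_nth 0).
move=> m hm; rewrite ifF ?mul0r //; apply/negbTE; apply: contra hm => /eqP h.
by apply/eqP/val_inj.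
Qed.

Definition ut N (k : 'I_N) : N.-tuple G := [tuple (if m == k then 1 else 0) | m < N].
Definition zt N : N.-tuple G := [tuple 0 | _ < N].

Lemma sum_delta N (c : 'I_N -> G) k :
  \sum_(m < N) c m * (if m == k then 1 else 0) = c k.
Proof.
rewrite (bigD1 k) //= eqxx mulr1 big1 ?addr0 // => m /negbTE ->.
by rewrite mulr0.
Qed.

Lemma sum_ut N (c : 'I_N -> G) k : \sum_(m < N) c m * tnth (ut k) m = c k.
Proof. by under eq_bigr do rewrite tnth_mktuple; rewrite sum_delta. Qed.

Lemma sum_zt N (c : 'I_N -> G) : \sum_(m < N) c m * tnth (zt N) m = 0.
Proof. by rewrite big1 // => m _; rewrite tnth_mktuple mulr0. Qed.

Lemma affine_equiv N (F H : N.-tuple G -> G) (al be : 'I_N -> G) ga de :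
  (forall y, F y = \sum_m al m * tnth y m + ga) ->
  (forall z, H z = \sum_m be m * tnth z m + de) ->
  equiv_fun F H -> ga = de /\ forall v, cnt al v = cnt be v.
Proof.
move=> hF hH [s hs].
have key y : \sum_m al m * tnth y m + ga = \sum_m be m * tnth y (s m) + de.
  by rewrite -hF hs hH; congr (_ + _); apply: eq_bigr => m _; rewrite tnth_mktuple.
have hz := key (zt N); rewrite sum_zt big1 ?add0r in hz; last first.
  by move=> m _; rewrite tnth_mktuple mulr0.
split => // v.
have hs' m0 : al (s m0) = be m0.
  have := key (ut (s m0)); rewrite sum_ut hz => /addIr ->.
  under eq_bigr do rewrite tnth_mktuple (inj_eq (@perm_inj _ s)).
  by rewrite sum_delta.
rewrite /cnt (reindex_inj (@perm_inj _ s)) /=.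
by apply: eq_bigr => m _; rewrite hs'.
Qed.

Lemma equiv_affine N (F H : N.-tuple G -> G) (al : 'I_N -> G) ga :
  (forall y, F y = \sum_m al m * tnth y m + ga) -> equiv_fun F H -> affine H.
Proof.
move=> hF [s hs]; exists (fun k => al (s k)), ga => z.
have -> : H z = F [tuple tnth z ((s^-1)%g i) | i < N].
  rewrite hs; congr H; apply: eq_from_tnth => i.
  by rewrite !tnth_mktuple permK.
rewrite hF; congr (_ + _); rewrite (reindex_inj (@perm_inj _ s)) /=.
by apply: eq_bigr => k _; rewrite tnth_mktuple permK.
Qed.
End Affine.

Section Step1.
Variable G : fieldType.
Local Open Scope ring_scope.

Lemma nth_mkt (T : Type) N (F : 'I_N -> T) x0 k (hk : (k < N)%N) :
  nth x0 [tuple F m | m < N] k = F (Ordinal hk).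
Proof. by have := tnth_nth x0 [tuple F m | m < N] (Ordinal hk); rewrite tnth_mktuple => <-. Qed.

Lemma ext_minor n' (g : n'.+1.-tuple G -> G) (i j : 'I_n'.+1) :
  (i < j)%N -> affine (minor g i j) ->
  exists (L : 'I_n'.+1 -> G) ga, forall x, tnth x i = tnth x j ->
    g x = \sum_k L k * tnth x k + ga.
Proof.
move=> hij [al [ga hm]].
exists (fun k => if unlift j k is Some m then al m else 0), ga => x hx.
pose y : n'.-tuple G := [tuple tnth x (lift j m) | m < n'].
have -> : g x = minor g i j y.
  rewrite /minor; congr g; apply: eq_from_tnth => k; rewrite !tnth_mktuple.
  case: (ltngtP k j) => hk.
  - have hk' : (k < n')%N := leq_trans hk (ltn_ord j).
    rewrite (nth_mkt _ _ hk'); congr tnth; apply: val_inj.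
    by rewrite /= /bump leqNgt hk.
  - have hk' : (k.-1 < n')%N.
      by rewrite -ltnS prednK ?ltn_ord // (leq_ltn_trans _ hk).
    rewrite (nth_mkt _ _ hk'); congr tnth; apply: val_inj; rewrite /= /bump.
    have k0 : (0 < k)%N := leq_ltn_trans (leq0n j) hk.
    have -> : (j <= k.-1)%N by rewrite -ltnS prednK.
    by rewrite /= add1n prednK.
  - have hi : (i < n')%N := leq_trans hij (ltn_ord j).
    rewrite (nth_mkt _ _ hi).
    have -> : lift j (Ordinal hi) = i by apply: val_inj; rewrite /= /bump leqNgt hij.
    by rewrite hx; congr tnth; apply: val_inj.
rewrite hm; congr (_ + _).
rewrite [RHS](bigD1_ord j) //= unlift_none mul0r add0r.
by apply: eq_bigr => m _; rewrite liftK tnth_mktuple.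
Qed.

Definition uu N (i j : 'I_N) : N.-tuple G :=
  [tuple (if m == i then 1 else 0) + (if m == j then 1 else 0) | m < N].

Lemma sum_uu N (c : 'I_N -> G) i j :
  \sum_(m < N) c m * tnth (uu i j) m = c i + c j.
Proof.
under eq_bigr do rewrite tnth_mktuple mulrDr.
by rewrite big_split /= !sum_delta.
Qed.

Lemma two_outside N (i j : 'I_N) : (4 <= N)%N ->
  exists k l : 'I_N, [/\ (k < l)%N, k != i, k != j, l != i & l != j].
Proof.
move=> hN; set A := ~: [set i; j].
have hA : (1 < #|A|)%N.
  have := cardsC [set i; j]; rewrite card_ord cards2.
  by rewrite -/A; case: (i != j) => /=; lia.
have /card_gt0P [k hk] : (0 < #|A|)%N by lia.
have /card_gt0P [l hl] : (0 < #|A :\ k|)%N.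
  by move: hA; rewrite (cardsD1 k) hk; lia.
move: hl; rewrite /A !inE negb_or => /and3P [hlk hli hlj].
move: hk; rewrite /A !inE negb_or => /andP [hki hkj].
case: (ltngtP k l) => h.
- by exists k, l.
- by exists l, k.
- by move: hlk; rewrite (_ : l = k) ?eqxx //; apply: val_inj.
Qed.
End Step1.

Lemma step1 (G : finFieldType) n' (g : n'.+1.-tuple G -> G) :
  (#|G| < n'.+1)%N -> (3 <= n')%N ->
  (forall i j : 'I_n'.+1, (i < j)%N -> affine (minor g i j)) ->
  exists (b : 'I_n'.+1 -> G) d, forall x, g x = (\sum_k b k * tnth x k + d)%R.
Proof.
move=> hG hn hmin.
set z := zt G n'.+1.
exists (fun k => g (ut G k) - g z)%R, (g z) => x.
have ext (i j : 'I_n'.+1) : (i < j)%N -> exists (L : 'I_n'.+1 -> G) ga, forall x, tnth x i = tnth x j ->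
    g x = (\sum_k L k * tnth x k + ga)%R by move=> h; exact: ext_minor (hmin _ _ h).
have add (i j : 'I_n'.+1) : i != j ->
    (g (uu G i j) + g z = g (ut G i) + g (ut G j))%R.
  move=> hij; have [k [l [hkl hki hkj hli hlj]]] := two_outside i j (hn : 4 <= n'.+1)%N.
  have [L [ga hL]] := ext k l hkl.
  have e1 : g z = ga by rewrite hL ?sum_zt ?add0r // !tnth_mktuple.
  have e2 m : m != k -> m != l -> g (ut G m) = (L m + ga)%R.
    by move=> h1 h2; rewrite hL ?sum_ut // !tnth_mktuple eq_sym (negbTE h1) eq_sym (negbTE h2).
  have e3 : g (uu G i j) = (L i + L j + ga)%R.
    rewrite hL ?sum_uu // !tnth_mktuple.
    by rewrite (negbTE hki) (negbTE hkj) (negbTE hli) (negbTE hlj) addr0.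
  rewrite e1 e3 e2 1?eq_sym // e2 1?eq_sym //; ring.
(* pigeonhole *)
have [i [j [hij hx]]] : exists i j : 'I_n'.+1, (i < j)%N /\ tnth x i = tnth x j.
  have : ~~ injectiveb (fun k => tnth x k).
    apply/negP => /injectiveP /leq_card; rewrite card_ord => hh.
    have hG' : (#|G| <= n')%N := hG.
    by have := leq_trans hh hG'; rewrite ltnn.
  case/injectivePn => i [j hne heq].
  case: (ltngtP i j) => h; first by exists i, j.
    by exists j, i.
  by move: hne; rewrite (_ : i = j) ?eqxx //; apply: val_inj.
have [L [ga hL]] := ext i j hij.
have hne : i != j by rewrite neq_ltn hij.
have e1 : g z = ga by rewrite hL ?sum_zt ?add0r // !tnth_mktuple.
have e2 (m : 'I_n'.+1) : m != i -> m != j -> g (ut G m) = (L m + ga)%R.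
  by move=> h1 h2; rewrite hL ?sum_ut // !tnth_mktuple eq_sym (negbTE h1) eq_sym (negbTE h2).
have e3 : g (uu G i j) = (L i + L j + ga)%R.
  by rewrite hL ?sum_uu // !tnth_mktuple !eqxx (negbTE hne) eq_sym (negbTE hne) addr0 add0r.
have hij2 : (g (ut G i) - g z + (g (ut G j) - g z) = L i + L j)%R.
  have := add i j hne; rewrite e3 e1 => h.
  have -> : (g (ut G i) - ga + (g (ut G j) - ga) = g (ut G i) + g (ut G j) - ga - ga)%R by ring.
  by rewrite -h; ring.
rewrite hL // e1; congr (_ + _)%R.
have hji : j != i by rewrite eq_sym.
rewrite (bigD1 i) // (bigD1 j) //= [in RHS](bigD1 i) // [in RHS](bigD1 j) //=.
rewrite !addrA; congr (_ + _)%R.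
  by rewrite -hx -!mulrDl -e1 hij2.
apply: eq_bigr => m /andP [h1 h2]; rewrite e2 //; congr (_ * _)%R; ring.
Qed.


Theorem mainTheorem14 (G : finFieldType) (n : nat)
  (hn : (maxn #|G| 3).+1 <= n)
  (f g : n.-tuple G -> G) :
  affine f -> same_deck f g -> equiv_fun g f.
Proof.
case: n hn f g => [|n'] // hn f g [a [c hf]] [s [hs hdeck]].
move: hn; rewrite ltnS geq_max => /andP [hG h3].
have hs0 := hs; case: hs0 => s' hs1 hs2.
have hmin : forall i j : 'I_n'.+1, (i < j)%N -> affine (minor g i j).
  move=> i j hij.
  pose J : pairs n'.+1 := exist (fun p : 'I_n'.+1 * 'I_n'.+1 => (p.1 < p.2)%N) (i, j) hij.
  have := hdeck (s' J); rewrite hs2 /=; apply: equiv_affine.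
  exact: (minor_affine (valP (s' J)) hf).
have [b [d hg]] := step1 hG h3 hmin.
have hI I : c = d /\ forall v, ccnt a (val I).1 (val I).2 v = ccnt b (val (s I)).1 (val (s I)).2 v.
  exact: (affine_equiv (minor_affine (valP I) hf) (minor_affine (valP (s I)) hg) (hdeck I)).
have hd : deckcnt a b s by move=> I v; case: (hI I) => _ ->.
have h0 : (0 < n')%N by lia.
have [hcd _] := hI (exist (fun p : 'I_n'.+1 * 'I_n'.+1 => (p.1 < p.2)%N) (ord0, ord_max) h0).
have hcnt := multiset h3 hs hd.
have hp : perm_eq [tuple a i | i < n'.+1] [tuple b i | i < n'.+1].
  by apply/allP => x _; apply/eqP; rewrite -!cnt_tuple.
case/tuple_permP: hp => p hp.
have hab i : a i = b (p i).
  have e : [tuple a i | i < n'.+1] = [tuple tnth [tuple b i | i < n'.+1] (p i) | i < n'.+1].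
    exact: val_inj.
  by have := congr1 (fun t => tnth t i) e; rewrite /= !tnth_mktuple.
exists p => x; rewrite hg hf hcd; congr (_ + _)%R.
rewrite (reindex_inj (@perm_inj _ p)) /=.
by apply: eq_bigr => i _; rewrite tnth_mktuple hab.
Qed.
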